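(* Let $X,Y$ be non-empty subsets of $A^+$. (i) $XY$ and $YX$ are both prefix (resp. maximal prefix) alt-induced codes if and only if $X$ and $Y$ are prefix (resp. maximal prefix) codes. (ii) $XY$ and $YX$ are both suffix (resp. maximal suffix) alt-induced codes if and only if $X$ and $Y$ are suffix (resp. maximal suffix) codes. (iii) $XY$ and $YX$ are both bifix (resp. thin maximal bifix) alt-induced codes if and only if $X$ and $Y$ are bifix (resp. thin maximal bifix) codes.
   Context: $A$ is a finite alphabet, $A^*$ the set of words, $A^+$ the non-empty words, $XY=\{xy:x\in X,y\in Y\}$. A code is a subset of $A^+$ in which every word has at most one factorization into its elements. A prefix (suffix) code is a subset of $A^+$ in which no word is a proper prefix (suffix) of another; a bifix code is both; such a code is maximal if not properly contained in another prefix (suffix, bifix) code over $A$. A set is thin if some word of $A^*$ is not a factor of any of its words. For non-empty $X,Y\subseteq A^+$, $(X,Y)$ is an alternative code if no word of $A^+$ admits two different similar alternative factorizations on $(X,Y)$ (factorizations $u_1\cdots u_n$, $n\ge2$, $u_i\in X\cup Y$, alternating between $X$ and $Y$; similar = beginning in the same set and ending in the same set); equivalently, $XY$ is a code and each element of $XY$ has exactly one factorization $xy$ with $x\in X,y\in Y$. An alt-induced code is a set $Z$ with $Z=UV$ for some alternative code $(U,V)$; a prefix (suffix, bifix, maximal prefix, etc.) alt-induced code is an alt-induced code which is also a prefix (suffix, bifix, maximal prefix, etc.) code. *)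

(* Defs.v *)
From mathcomp Require Import all_boot.
Set Implicit Arguments. Unset Strict Implicit. Unset Printing Implicit Defensive.

Section Codes.
Variable A : finType.
Definition lang := seq A -> Prop.

Definition in_Aplus (X : lang) : Prop := forall w, X w -> w <> [::].
Definition nonempty (X : lang) : Prop := exists w, X w.

Definition catl (X Y : lang) : lang :=
  fun w => exists x y, X x /\ Y y /\ w = x ++ y.

Definition code (X : lang) : Prop :=
  in_Aplus X /\
  forall ws1 ws2 : seq (seq A),
    (forall u, u \in ws1 -> X u) -> (forall u, u \in ws2 -> X u) ->
    flatten ws1 = flatten ws2 -> ws1 = ws2.

Definition proper_prefix (u v : seq A) := prefix u v && (u != v).
Definition proper_suffix (u v : seq A) := suffix u v && (u != v).

Definition prefix_code (X : lang) : Prop :=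
  in_Aplus X /\ forall u v, X u -> X v -> ~ proper_prefix u v.
Definition suffix_code (X : lang) : Prop :=
  in_Aplus X /\ forall u v, X u -> X v -> ~ proper_suffix u v.
Definition bifix_code (X : lang) : Prop := prefix_code X /\ suffix_code X.

Definition subl (X Y : lang) := forall w, X w -> Y w.

Definition maximal_in (P : lang -> Prop) (X : lang) : Prop :=
  P X /\ forall Z : lang, P Z -> subl X Z -> subl Z X.

Definition maximal_prefix_code := maximal_in prefix_code.
Definition maximal_suffix_code := maximal_in suffix_code.
Definition maximal_bifix_code := maximal_in bifix_code.

Definition thin (X : lang) : Prop :=
  exists w : seq A, forall u, X u -> ~~ infix w u.

(* Alternative factorization on (X,Y) starting in X (b = false) or Y (b = true):
   a list u_1 ... u_n, n >= 2, alternating between X and Y. *)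
Definition alt_fact (X Y : lang) (b : bool) (ws : seq (seq A)) : Prop :=
  2 <= size ws /\
  forall i, i < size ws -> (if odd i (+) b then Y else X) (nth [::] ws i).

(* (X,Y) alternative code: X, Y non-empty subsets of A^+, and no word has two
   different similar alternative factorizations (same starting set, same
   ending set -- i.e. same start and same parity of length). *)
Definition alt_code (X Y : lang) : Prop :=
  nonempty X /\ nonempty Y /\ in_Aplus X /\ in_Aplus Y /\
  forall (b : bool) (ws1 ws2 : seq (seq A)),
    alt_fact X Y b ws1 -> alt_fact X Y b ws2 ->
    odd (size ws1) = odd (size ws2) ->
    flatten ws1 = flatten ws2 -> ws1 = ws2.

Definition alt_induced (Z : lang) : Prop :=
  exists U V : lang, alt_code U V /\ forall w, Z w <-> catl U V w.

End Codes.

(* Main.v *)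
Require Import Defs.
From mathcomp Require Import all_boot.
From mathcomp Require Import zify.
From Stdlib Require Import Classical FunctionalExtensionality PropExtensionality.
Set Implicit Arguments. Unset Strict Implicit. Unset Printing Implicit Defensive.

Section S.
Variable A : finType.
Implicit Types X Y Z : lang A.
Implicit Types u v w x y : seq A.

Lemma catcancel (x a b : seq A) : x ++ a = x ++ b -> a = b.
Proof. by move=> /(congr1 (drop (size x))); rewrite !drop_size_cat. Qed.

Lemma comparable (x a y b : seq A) : x ++ a = y ++ b -> prefix x y \/ prefix y x.
Proof.
move=> E; case: (leqP (size x) (size y)) => H.
  left; rewrite prefixE; apply/eqP.
  have E2 : take (size x) (x ++ a) = x by rewrite take_size_cat.
  by rewrite E takel_cat // in E2.
right; rewrite prefixE; apply/eqP.
have E2 : take (size y) (y ++ b) = y by rewrite take_size_cat.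
by rewrite -E takel_cat ?(ltnW H) in E2.
Qed.

Lemma suffix_comparable (a x b y : seq A) : a ++ x = b ++ y -> suffix x y \/ suffix y x.
Proof.
move=> E; have: rev x ++ rev a = rev y ++ rev b by rewrite -!rev_cat E.
by move/comparable.
Qed.

Lemma pc_pre Z x y : prefix_code Z -> Z x -> Z y -> prefix x y -> x = y.
Proof.
move=> [_ HZ] Zx Zy P; apply/eqP; apply/negPn/negP => ne.
by apply: (HZ x y Zx Zy); rewrite /proper_prefix P ne.
Qed.

Lemma pc_eq Z x y a b : prefix_code Z -> Z x -> Z y -> x ++ a = y ++ b -> x = y.
Proof.
move=> hZ Zx Zy E; case: (comparable E) => P; first exact: (pc_pre hZ Zx Zy P).
by apply/esym; apply: (pc_pre hZ Zy Zx P).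
Qed.

Lemma aplus_cat X Y : in_Aplus X -> in_Aplus (catl X Y).
Proof.
move=> hX w [x [y [Xx [Yy ->]]]]; have := hX x Xx.
case: x Xx => [_ H|a s _ _] //; by case: (H erefl).
Qed.

Lemma prefix_cat X Y : prefix_code X -> prefix_code Y -> prefix_code (catl X Y).
Proof.
move=> hX hY; split; first exact: aplus_cat hX.1.
move=> _ _ [x [y [Xx [Yy ->]]]] [x' [y' [Xx' [Yy' ->]]]] /andP [/prefixP [r E] ne].
rewrite -catA in E.
have exx := pc_eq hX Xx' Xx E; subst x'.
have E2 := catcancel E.
have eyy : y' = y by apply: (@pc_eq _ _ _ [::] r hY Yy' Yy); rewrite cats0.
by rewrite eyy eqxx in ne.
Qed.

Lemma P1 X Y : prefix_code (catl Y X) -> nonempty Y -> in_Aplus X -> prefix_code X.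
Proof.
move=> hYX [y Yy] aX; split => // u v Xu Xv /andP [/prefixP [r Ev] ne].
have hm1 : catl Y X (y ++ u) by exists y, u.
have hm2 : catl Y X (y ++ v) by exists y, v.
apply: (hYX.2 _ _ hm1 hm2); move: ne; rewrite Ev => ne.
rewrite /proper_prefix catA prefix_prefix /=.
by apply: contra ne => /eqP; rewrite -catA => /catcancel/eqP.
Qed.

Definition rc X := forall u, exists x, X x /\ (prefix u x \/ prefix x u).
Definition lc X := forall u, exists x, X x /\ (suffix u x \/ suffix x u).

Lemma rc_max X : maximal_prefix_code X -> nonempty X -> rc X.
Proof.
move=> [hX hmax] [x0 Xx0] u; apply: NNPP => H.
have Hu : forall x, X x -> ~ prefix u x /\ ~ prefix x u.
  by move=> x Xx; split=> P; apply: H; exists x; split => //; [left|right].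
pose Z w := X w \/ w = u.
have ZP : prefix_code Z.
  split.
    move=> w [Xw| ->]; first exact: hX.1.
    by move=> E; apply: (Hu x0 Xx0).1; rewrite E prefix0s.
  move=> a b [Xa|->] [Xb|->] /andP[P ne].
  - by apply: (hX.2 a b Xa Xb); rewrite /proper_prefix P ne.
  - exact: (Hu a Xa).2 P.
  - exact: (Hu b Xb).1 P.
  - by rewrite eqxx in ne.
have Xu := hmax Z ZP (fun w Xw => or_introl Xw) u (or_intror erefl).
exact: (Hu u Xu).1 (prefix_refl u).
Qed.

Lemma rc_sub X Z : rc X -> prefix_code Z -> subl X Z -> subl Z X.
Proof.
move=> hrc hZ sub w Zw; case: (hrc w) => x [Xx [P|P]].
- by have := pc_pre hZ Zw (sub x Xx) P => ->.
- by have := pc_pre hZ (sub x Xx) Zw P => <-.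
Qed.

Lemma rc_catl X Y : rc X -> rc Y -> nonempty Y -> rc (catl X Y).
Proof.
move=> hx hy [y0 Yy0] u; case: (hx u) => x [Xx [P|/prefixP [u' ->]]].
  exists (x ++ y0); split; [by exists x, y0; do !split | left; exact: prefix_catl].
case: (hy u') => y [Yy [P|P]]; exists (x ++ y); (split; first by exists x, y; do !split).
- by left; rewrite prefix_catr // eqxx.
- by right; rewrite prefix_catr // eqxx.
Qed.

Lemma MAXP X Y : maximal_prefix_code (catl X Y) -> prefix_code X -> prefix_code Y ->
  nonempty Y -> maximal_prefix_code X.
Proof.
move=> [hXY hmax] hX hY [y0 Yy0]; split => // Z hZ sub z Zz.
have sub' : subl (catl X Y) (catl Z Y).
  by move=> w [x [y [Xx [Yy ->]]]]; exists x, y; split => //; apply: sub.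
have [x [y [Xx [Yy E]]]] := hmax _ (prefix_cat hZ hY) sub' (z ++ y0) (ex_intro _ z (ex_intro _ y0 (conj Zz (conj Yy0 erefl)))).
by have := pc_eq hZ Zz (sub x Xx) E => ->.
Qed.

Lemma MPcat X Y : maximal_prefix_code X -> maximal_prefix_code Y -> nonempty X -> nonempty Y ->
  maximal_prefix_code (catl X Y).
Proof.
move=> mX mY nX nY; split; first exact: prefix_cat mX.1 mY.1.
move=> Z hZ; apply: rc_sub hZ.
exact: rc_catl (rc_max mX nX) (rc_max mY nY) nY.
Qed.

Definition revl X : lang A := fun w => X (rev w).

Lemma revlK X : revl (revl X) = X.
Proof. by apply: functional_extensionality => w; rewrite /revl revK. Qed.

Lemma revl_catl X Y : revl (catl X Y) = catl (revl Y) (revl X).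
Proof.
apply: functional_extensionality => w; apply: propositional_extensionality; split.
  move=> [x [y [Xx [Yy E]]]]; exists (rev y), (rev x); rewrite /revl !revK.
  by do !split => //; rewrite -[w]revK E rev_cat.
move=> [y [x [Yy [Xx ->]]]]; exists (rev x), (rev y).
by do !split => //; rewrite rev_cat.
Qed.

Lemma aplus_rev X : in_Aplus (revl X) <-> in_Aplus X.
Proof.
split => H w Xw E.
  by apply: (H (rev w)); rewrite /revl ?revK // E.
by apply: (H _ Xw); rewrite E.
Qed.

Lemma ne_rev X : nonempty (revl X) <-> nonempty X.
Proof.
split=> [[w Xw]|[w Xw]]; first by exists (rev w).
by exists (rev w); rewrite /revl revK.
Qed.

Lemma proper_rev u v : proper_prefix (rev u) (rev v) = proper_suffix u v.
Proof. by rewrite /proper_prefix /proper_suffix (inj_eq (can_inj revK)). Qed.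

Lemma suffix_prefix_rev X : suffix_code X <-> prefix_code (revl X).
Proof.
split=> [[h1 h2]|[h1 h2]]; split.
- exact/aplus_rev.
- move=> u v Xu Xv; have := h2 _ _ Xu Xv; by rewrite -proper_rev !revK.
- exact/aplus_rev.
- move=> u v Xu Xv P; apply: (h2 (rev u) (rev v)); rewrite /revl ?revK //.
  by rewrite proper_rev.
Qed.

Lemma prefix_suffix_rev X : prefix_code X <-> suffix_code (revl X).
Proof. by rewrite suffix_prefix_rev revlK. Qed.

Lemma bifix_rev X : bifix_code X <-> bifix_code (revl X).
Proof.
rewrite /bifix_code; split=> [[h1 h2]|[h1 h2]]; split.
- exact: (suffix_prefix_rev X).1 h2.
- exact: (prefix_suffix_rev X).1 h1.
- exact: (prefix_suffix_rev X).2 h2.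
- exact: (suffix_prefix_rev X).2 h1.
Qed.

Lemma maximal_rev (P Q : lang A -> Prop) X :
  (forall Z, P Z <-> Q (revl Z)) -> maximal_in P X <-> maximal_in Q (revl X).
Proof.
move=> hPQ; split=> [[hP hmax]|[hQ hmax]]; split.
- exact/hPQ.
- move=> Z hZ sub w Zw.
  have hZ' : P (revl Z) by apply/hPQ; rewrite revlK.
  have sub' : subl X (revl Z) by move=> u Xu; apply: sub; rewrite /revl revK.
  by have := hmax _ hZ' sub' (rev w); rewrite /revl revK; apply.
- by apply/hPQ.
- move=> Z hZ sub w Zw.
  have hZ' : Q (revl Z) by apply/hPQ.
  have sub' : subl (revl X) (revl Z) by move=> u Xu; apply: sub.
  by have := hmax _ hZ' sub' (rev w); rewrite /revl revK; apply.
Qed.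

Lemma msuffix_rev X : maximal_suffix_code X <-> maximal_prefix_code (revl X).
Proof. apply: maximal_rev => Z; exact: suffix_prefix_rev. Qed.

Lemma mbifix_rev X : maximal_bifix_code X <-> maximal_bifix_code (revl X).
Proof. apply: maximal_rev => Z; exact: bifix_rev. Qed.

Lemma suffix_cat X Y : suffix_code X -> suffix_code Y -> suffix_code (catl X Y).
Proof.
rewrite !suffix_prefix_rev revl_catl => hX hY; exact: prefix_cat.
Qed.

Lemma S1 X Y : suffix_code (catl X Y) -> nonempty Y -> in_Aplus X -> suffix_code X.
Proof.
rewrite !suffix_prefix_rev revl_catl -ne_rev -aplus_rev => h1 h2 h3; exact: P1 h1 h2 h3.
Qed.

Lemma MAXS X Y : maximal_suffix_code (catl X Y) -> suffix_code X -> suffix_code Y ->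
  nonempty X -> maximal_suffix_code Y.
Proof.
rewrite !msuffix_rev !suffix_prefix_rev revl_catl -ne_rev => h1 h2 h3 h4.
exact: MAXP h1 h3 h2 h4.
Qed.

Lemma MScat X Y : maximal_suffix_code X -> maximal_suffix_code Y -> nonempty X -> nonempty Y ->
  maximal_suffix_code (catl X Y).
Proof.
rewrite !msuffix_rev revl_catl -(ne_rev X) -(ne_rev Y) => h1 h2 h3 h4.
exact: MPcat h2 h1 h4 h3.
Qed.

Lemma MAXB X Y : maximal_bifix_code (catl X Y) -> bifix_code X -> bifix_code Y ->
  nonempty Y -> maximal_bifix_code X.
Proof.
move=> [hXY hmax] hX hY [y0 Yy0]; split => // Z hZ sub z Zz.
have sub' : subl (catl X Y) (catl Z Y).
  by move=> w [x [y [Xx [Yy ->]]]]; exists x, y; split => //; apply: sub.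
have hZY : bifix_code (catl Z Y).
  by split; [exact: prefix_cat hZ.1 hY.1 | exact: suffix_cat hZ.2 hY.2].
have [x [y [Xx [Yy E]]]] := hmax _ hZY sub' (z ++ y0) (ex_intro _ z (ex_intro _ y0 (conj Zz (conj Yy0 erefl)))).
by have := pc_eq hZ.1 Zz (sub x Xx) E => ->.
Qed.

Lemma thin_l X Y : thin (catl X Y) -> nonempty Y -> thin X.
Proof.
move=> [t h] [y0 Yy0]; exists t => x Xx; apply/negP => I.
have := h (x ++ y0) (ex_intro _ x (ex_intro _ y0 (conj Xx (conj Yy0 erefl)))).
by rewrite (infix_catr _ I).
Qed.

Lemma thin_r X Y : thin (catl X Y) -> nonempty X -> thin Y.
Proof.
move=> [t h] [x0 Xx0]; exists t => y Yy; apply/negP => I.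
have := h (x0 ++ y) (ex_intro _ x0 (ex_intro _ y (conj Xx0 (conj Yy erefl)))).
by rewrite (infix_catl _ I).
Qed.

Lemma thin_cat X Y : thin X -> thin Y -> thin (catl X Y).
Proof.
move=> [t1 h1] [t2 h2]; exists (t1 ++ t2) => _ [x [y [Xx [Yy ->]]]].
apply/negP => /infixP [s [s' E]].
have E' : x ++ y = (s ++ t1) ++ (t2 ++ s') by rewrite E -!catA.
case: (comparable E') => /prefixP [z Ez].
- have := h2 y Yy; apply/negP/negPn/infixP; exists z, s'.
  by apply: (@catcancel x); rewrite E' Ez -!catA.
- have := h1 x Xx; apply/negP/negPn/infixP; exists s, z.
  by rewrite Ez -!catA.
Qed.

Lemma alt_pre_gen (P : nat -> lang A) (ws1 ws2 : seq (seq A)) :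
  (forall i, prefix_code (P i)) ->
  (forall i, i < size ws1 -> P i (nth [::] ws1 i)) ->
  (forall i, i < size ws2 -> P i (nth [::] ws2 i)) ->
  flatten ws1 = flatten ws2 -> ws1 = ws2.
Proof.
elim: ws1 ws2 P => [|x ws1 IH] [|y ws2] P hP h1 h2 //=.
- have /= Py := h2 0 erefl; have := (hP 0).1 _ Py.
  by case: y {h2} Py => [_ H|a s _ _] //; case: (H erefl).
- have /= Px := h1 0 erefl; have := (hP 0).1 _ Px.
  by case: x {h1 IH} Px => [_ H|a s _ _] //; case: (H erefl).
move=> E; have /= Px := h1 0 erefl; have /= Py := h2 0 erefl.
have exy := pc_eq (hP 0) Px Py E; subst y; congr (_ :: _).
apply: (IH ws2 (fun i => P i.+1)) => //.
- by move=> i hi; apply: (h1 i.+1).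
- by move=> i hi; apply: (h2 i.+1).
exact: catcancel E.
Qed.

Lemma alt_prefix X Y : prefix_code X -> prefix_code Y -> nonempty X -> nonempty Y -> alt_code X Y.
Proof.
move=> hX hY nX nY; do 4 (split; first by [apply: hX.1 | apply: hY.1 | done]).
move=> b ws1 ws2 [_ h1] [_ h2] _ E.
apply: (alt_pre_gen (P := fun i => if odd i (+) b then Y else X)) h1 h2 E.
by move=> i; case: ifP.
Qed.

Lemma alt_suffix X Y : suffix_code X -> suffix_code Y -> nonempty X -> nonempty Y -> alt_code X Y.
Proof.
move=> hX hY nX nY; do 4 (split; first by [apply: hX.1 | apply: hY.1 | done]).
move=> b ws1 ws2 [s1 h1] [s2 h2] hodd E.
pose r (ws : seq (seq A)) := map rev (rev ws).
have rK : forall ws, r (r ws) = ws.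
  by move=> ws; rewrite /r -map_rev revK (mapK revK).
have rflat : forall ws, flatten (r ws) = rev (flatten ws).
  by move=> ws; rewrite /r map_rev rev_flatten.
pose c := odd (size ws1).-1 (+) b.
have key : forall ws, alt_fact X Y b ws -> odd (size ws) = odd (size ws1) ->
  forall j, j < size (r ws) -> revl (if odd j (+) c then Y else X) (nth [::] (r ws) j).
  move=> ws [sz h] ho j; rewrite size_map size_rev => hj.
  rewrite /r (nth_map [::]) ?size_rev // nth_rev // /revl revK.
  have hi : size ws - j.+1 < size ws by rewrite ltn_subrL; apply/andP; split => //; lia.
  have := h _ hi.
  have -> : odd (size ws - j.+1) (+) b = odd j (+) c; last by [].
  rewrite /c.
  case: (size ws) hj ho hi => [//|n] hj ho hi.
  case: (size ws1) s1 ho => [//|m] _ ho.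
  rewrite subSS oddB; last by lia.
  rewrite /= in ho; have -> : odd n = odd m by move: ho; case: (odd n); case: (odd m).
  by rewrite (addbC (odd m)) -addbA.
have hPc : forall i, prefix_code (revl (if odd i (+) c then Y else X)).
  by move=> i; case: ifP => _; apply/suffix_prefix_rev.
have := alt_pre_gen hPc (key ws1 (conj s1 h1) erefl) (key ws2 (conj s2 h2) (esym hodd)).
rewrite !rflat E => /(_ erefl) E2.
by rewrite -(rK ws1) E2 rK.
Qed.

Definition star X w := exists ws : seq (seq A), (forall u, u \in ws -> X u) /\ flatten ws = w.
Definition alive X p := exists q, star X (p ++ q).

Lemma RU X (ws1 ws2 : seq (seq A)) r : prefix_code X ->
  (forall u, u \in ws1 -> X u) -> (forall u, u \in ws2 -> X u) ->
  flatten ws1 ++ r = flatten ws2 -> star X r.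
Proof.
move=> hX; elim: ws1 ws2 => [|x ws1 IH] ws2 h1 h2 /= E; first by exists ws2.
have Xx := h1 x (mem_head _ _).
case: ws2 h2 E => [|y ws2] h2 /= E.
  have := hX.1 x Xx; case: x {h1 IH} Xx E => [_ _ H|a s _] //; case: (H erefl).
rewrite -catA in E.
have exy := pc_eq hX Xx (h2 y (mem_head _ _)) E; subst y.
apply: (IH ws2).
- by move=> u hu; apply: h1; rewrite inE hu orbT.
- by move=> u hu; apply: h2; rewrite inE hu orbT.
exact: catcancel E.
Qed.

Lemma cut X t (ws : seq (seq A)) p r : (forall u, u \in ws -> X u) ->
  (forall u, X u -> ~~ infix t u) -> t <> [::] -> flatten ws = p ++ t ++ r ->
  exists o ws1 ws2, o < size t /\ ws = ws1 ++ ws2 /\ flatten ws1 = p ++ take o t.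
Proof.
move=> + ht tne; elim: ws p => [|x ws IH] p hws /= E.
  exfalso; have := congr1 size E; rewrite !size_cat.
  by case: t tne {ht E} => // a t' _ /=; lia.
have Xx := hws x (mem_head _ _).
case: (leqP (size x) (size p)) => H.
  have Ep : p = x ++ drop (size x) p.
    have E1 : take (size x) (x ++ flatten ws) = x by rewrite take_size_cat.
    by rewrite E takel_cat // in E1; rewrite -{1}(cat_take_drop (size x) p) E1.
  have E' : flatten ws = drop (size x) p ++ t ++ r.
    by apply: (@catcancel x); rewrite E {1}Ep -catA.
  have [|o [ws1 [ws2 [ho [-> hf]]]]] := IH (drop (size x) p) _ E'.
    by move=> u hu; apply: hws; rewrite inE hu orbT.
  exists o, (x :: ws1), ws2; do !split => //=.
  by rewrite hf catA -Ep.
have E2 : x ++ flatten ws = p ++ (t ++ r) by [].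
case: (comparable E2) => /prefixP [s Es].
  by exfalso; move: H; rewrite Es size_cat ltnNge leq_addr.
have E3 : x ++ flatten ws = (p ++ t) ++ r by rewrite catA in E2.
case: (comparable E3) => /prefixP [m Em].
- case: m Em => [|a m] Em.
    by rewrite cats0 in Em; have := ht x Xx; rewrite -Em suffix_infix.
  have Et : t = s ++ a :: m.
    by apply: (@catcancel p); rewrite Em Es -catA.
  exists (size s), [:: x], ws; do !split => //=.
  - by rewrite Et size_cat /=; lia.
  - by rewrite cats0 Es Et take_size_cat.
- by have := ht x Xx; rewrite Em -catA (infix_catl _ (prefix_infix t m)).
Qed.

Lemma lc_star X : lc X -> in_Aplus X -> forall w, exists a, star X (a ++ w).
Proof.
move=> hlc hA w; elim: {w}(size w).+1 {-2}w (ltnSn (size w)) => // n IH w hw.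
case: (hlc w) => x [Xx [/suffixP [a Ea]|/suffixP [w' Ew]]].
  exists a, [:: x]; split; last by rewrite /= cats0.
  by move=> u; rewrite inE => /eqP ->.
have xne := hA x Xx.
have hw' : size w' < n.
  move: hw; rewrite Ew size_cat.
  by case: (x) xne => // b x' _ /=; lia.
have [a [ws [hws hf]]] := IH w' hw'.
exists a, (ws ++ [:: x]); split.
  by move=> u; rewrite mem_cat inE => /orP [/hws|/eqP ->].
by rewrite flatten_cat hf /= cats0 Ew catA.
Qed.

Lemma K X : prefix_code X -> nonempty X -> thin X -> lc X -> rc X.
Proof.
move=> hX [x0 Xx0] [t ht] hlc; apply: NNPP => nrc.
have [u hu] : exists u, forall x, X x -> ~ prefix u x /\ ~ prefix x u.
  apply: NNPP => H; apply: nrc => u; apply: NNPP => H2; apply: H; exists u => x Xx.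
  by split => P; apply: H2; exists x; split => //; [left|right].
have tne : t <> [::].
  by move=> E; have := ht x0 Xx0; rewrite E infix0s.
have dead : forall z, ~ star X (u ++ z).
  move=> z [ws [hws hf]]; case: ws hws hf => [|x ws] hws /= hf.
    have u0 : u = [::] by case: u {hu} hf.
    by apply: (hu x0 Xx0).1; rewrite u0 prefix0s.
  have Xx := hws x (mem_head _ _).
  by case: (comparable hf) => P; [apply: (hu x Xx).2 | apply: (hu x Xx).1].
have kill1 : forall s, exists w, ~ alive X (s ++ w).
  move=> s; case: (classic (alive X s)) => [[q [ws1 [h1 f1]]]|ns].
    exists (q ++ u) => [[z [ws2 [h2 f2]]]]; apply: (dead z); apply: (RU hX h1 h2).
    by rewrite f1 f2 -!catA.
  by exists [::]; rewrite cats0.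
have mono : forall s w, alive X (s ++ w) -> alive X s.
  by move=> s w [q hq]; exists (w ++ q); rewrite catA.
have killall : forall S : seq (seq A), exists w, forall s, s \in S -> ~ alive X (s ++ w).
  move=> S; elim: {S}(size S).+1 {-2}S (ltnSn (size S)) => // n IH [|s S] hS.
    by exists [::] => s; rewrite in_nil.
  have [w1 hw1] := kill1 s.
  have [|w' hw'] := IH [seq s' ++ w1 | s' <- S]; first by rewrite size_map; move: hS => /=; lia.
  exists (w1 ++ w') => s'; rewrite inE => /orP [/eqP -> | hs'].
    by rewrite catA => /mono.
  by have := hw' (s' ++ w1) (map_f _ hs'); rewrite -catA.
pose S := [seq drop o t | o <- iota 0 (size t)].
have [w hw] := killall S.
have [a [ws [hws hf]]] := lc_star hlc hX.1 (t ++ w).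
have [o [ws1 [ws2 [ho [Ews hf1]]]]] := cut hws ht tne hf.
apply: (hw (drop o t)).
  by apply/mapP; exists o; rewrite // mem_iota.
exists [::], ws2; split.
  by move=> v hv; apply: hws; rewrite Ews mem_cat hv orbT.
rewrite cats0; move: hf; rewrite Ews flatten_cat hf1 -catA => /catcancel E.
apply: (@catcancel (take o t)); by rewrite catA cat_take_drop.
Qed.

Lemma DI X : maximal_bifix_code X -> nonempty X -> rc X \/ lc X.
Proof.
move=> [[hP hS] hmax] [x0 Xx0]; case: (classic (rc X)) => [|nrc]; [by left|right].
apply: NNPP => nlc.
have [u hu] : exists u, forall x, X x -> ~ prefix u x /\ ~ prefix x u.
  apply: NNPP => H; apply: nrc => u; apply: NNPP => H2; apply: H; exists u => x Xx.
  by split => P; apply: H2; exists x; split => //; [left|right].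
have [u' hu'] : exists u, forall x, X x -> ~ suffix u x /\ ~ suffix x u.
  apply: NNPP => H; apply: nlc => u2; apply: NNPP => H2; apply: H; exists u2 => x Xx.
  by split => P; apply: H2; exists x; split => //; [left|right].
pose v := u ++ u'.
pose Z w := X w \/ w = v.
have vne : v <> [::].
  move=> E; have := congr1 size E; rewrite size_cat /= => /eqP; rewrite addn_eq0.
  move=> /andP [/eqP/size0nil u0 _].
  by apply: (hu x0 Xx0).1; rewrite u0 prefix0s.
have hZ : bifix_code Z.
  split; split.
  - by move=> w [Xw| ->]; [exact: hP.1|].
  - move=> a b [Xa|->] [Xb|->] /andP[P ne].
    + by apply: (hP.2 a b Xa Xb); rewrite /proper_prefix P ne.
    + move/prefixP: P => [s Es]; case: (comparable (esym Es)) => P'.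
      * exact: (hu a Xa).2 P'.
      * exact: (hu a Xa).1 P'.
    + exact: (hu b Xb).1 (catl_prefix P).
    + by rewrite eqxx in ne.
  - by move=> w [Xw| ->]; [exact: hP.1|].
  - move=> a b [Xa|->] [Xb|->] /andP[P ne].
    + by apply: (hS.2 a b Xa Xb); rewrite /proper_suffix P ne.
    + move/suffixP: P => [s Es]; case: (suffix_comparable (esym Es)) => P'.
      * exact: (hu' a Xa).2 P'.
      * exact: (hu' a Xa).1 P'.
    + exact: (hu' b Xb).1 (suffix_trans (suffix_suffix u u') P).
    + by rewrite eqxx in ne.
have Xv := hmax Z hZ (fun w Xw => or_introl Xw) v (or_intror erefl).
exact: (hu v Xv).1 (prefix_prefix u u').
Qed.

Lemma KEY X : maximal_bifix_code X -> nonempty X -> thin X -> rc X.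
Proof.
move=> mX nX tX; case: (DI mX nX) => // hl.
exact: K mX.1.1 nX tX hl.
Qed.

Lemma MBcat X Y : thin X -> maximal_bifix_code X -> thin Y -> maximal_bifix_code Y ->
  nonempty X -> nonempty Y -> maximal_bifix_code (catl X Y).
Proof.
move=> tX mX tY mY nX nY; split.
  by split; [exact: prefix_cat mX.1.1 mY.1.1 | exact: suffix_cat mX.1.2 mY.1.2].
move=> Z hZ; apply: rc_sub hZ.1.
exact: rc_catl (KEY mX nX tX) (KEY mY nY tY) nY.
Qed.

End S.

Theorem theoremT (A : finType) (X Y : lang A) :
  nonempty X -> nonempty Y -> in_Aplus X -> in_Aplus Y ->
  (* (i) *)
  ((alt_induced (catl X Y) /\ prefix_code (catl X Y) /\
    alt_induced (catl Y X) /\ prefix_code (catl Y X))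
     <-> (prefix_code X /\ prefix_code Y)) /\
  ((alt_induced (catl X Y) /\ maximal_prefix_code (catl X Y) /\
    alt_induced (catl Y X) /\ maximal_prefix_code (catl Y X))
     <-> (maximal_prefix_code X /\ maximal_prefix_code Y)) /\
  (* (ii) *)
  ((alt_induced (catl X Y) /\ suffix_code (catl X Y) /\
    alt_induced (catl Y X) /\ suffix_code (catl Y X))
     <-> (suffix_code X /\ suffix_code Y)) /\
  ((alt_induced (catl X Y) /\ maximal_suffix_code (catl X Y) /\
    alt_induced (catl Y X) /\ maximal_suffix_code (catl Y X))
     <-> (maximal_suffix_code X /\ maximal_suffix_code Y)) /\
  (* (iii) *)
  ((alt_induced (catl X Y) /\ bifix_code (catl X Y) /\
    alt_induced (catl Y X) /\ bifix_code (catl Y X))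
     <-> (bifix_code X /\ bifix_code Y)) /\
  ((alt_induced (catl X Y) /\ thin (catl X Y) /\ maximal_bifix_code (catl X Y) /\
    alt_induced (catl Y X) /\ thin (catl Y X) /\ maximal_bifix_code (catl Y X))
     <-> (thin X /\ maximal_bifix_code X /\ thin Y /\ maximal_bifix_code Y)).
Proof.
move=> nX nY aX aY.
have AI : forall U V : lang A, alt_code U V -> alt_induced (catl U V).
  by move=> U V h; exists U, V; split.
have APre : forall U V : lang A, prefix_code U -> prefix_code V -> nonempty U -> nonempty V ->
  alt_induced (catl U V) by move=> U V *; apply: AI; exact: alt_prefix.
have ASuf : forall U V : lang A, suffix_code U -> suffix_code V -> nonempty U -> nonempty V ->
  alt_induced (catl U V) by move=> U V *; apply: AI; exact: alt_suffix.
split; [|split; [|split; [|split; [|split]]]].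
- split.
    by move=> [_ [pXY [_ pYX]]]; split; [exact: P1 pYX nY aX | exact: P1 pXY nX aY].
  move=> [pX pY].
  by split; [|split; [|split]]; [exact: APre|exact: prefix_cat|exact: APre|exact: prefix_cat].
- split.
    move=> [_ [mXY [_ mYX]]].
    have pX := P1 mYX.1 nY aX; have pY := P1 mXY.1 nX aY.
    by split; [exact: MAXP mXY pX pY nY | exact: MAXP mYX pY pX nX].
  move=> [mX mY].
  by split; [|split; [|split]]; [exact: APre mX.1 mY.1 nX nY|exact: MPcat
     |exact: APre mY.1 mX.1 nY nX|exact: MPcat].
- split.
    by move=> [_ [sXY [_ sYX]]]; split; [exact: S1 sXY nY aX | exact: S1 sYX nX aY].
  move=> [sX sY].
  by split; [|split; [|split]]; [exact: ASuf|exact: suffix_cat|exact: ASuf|exact: suffix_cat].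
- split.
    move=> [_ [mXY [_ mYX]]].
    have sX := S1 mXY.1 nY aX; have sY := S1 mYX.1 nX aY.
    by split; [exact: MAXS mYX sY sX nY | exact: MAXS mXY sX sY nX].
  move=> [mX mY].
  by split; [|split; [|split]]; [exact: ASuf mX.1 mY.1 nX nY|exact: MScat
     |exact: ASuf mY.1 mX.1 nY nX|exact: MScat].
- split.
    move=> [_ [[pXY sXY] [_ [pYX sYX]]]].
    by split; split; [exact: P1 pYX nY aX | exact: S1 sXY nY aX | exact: P1 pXY nX aY | exact: S1 sYX nX aY].
  move=> [[pX sX] [pY sY]].
  split; [exact: APre|split; [split; [exact: prefix_cat|exact: suffix_cat]|]].
  split; [exact: APre|split; [exact: prefix_cat|exact: suffix_cat]].
- split.
    move=> [_ [tXY [mXY [_ [tYX mYX]]]]].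
    have bX : bifix_code X by split; [exact: P1 mYX.1.1 nY aX | exact: S1 mXY.1.2 nY aX].
    have bY : bifix_code Y by split; [exact: P1 mXY.1.1 nX aY | exact: S1 mYX.1.2 nX aY].
    split; first exact: thin_l tXY nY.
    split; first exact: MAXB mXY bX bY nY.
    split; first exact: thin_l tYX nX.
    exact: MAXB mYX bY bX nX.
  move=> [tX [mX [tY mY]]].
  split; first exact: APre mX.1.1 mY.1.1 nX nY.
  split; first exact: thin_cat.
  split; first exact: MBcat.
  split; first exact: APre mY.1.1 mX.1.1 nY nX.
  split; first exact: thin_cat.
  exact: MBcat.
Qed.
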